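(* Let $(\mathcal C,\mathcal D,O,\vec z,v)$ be a configuration for $(F,f)$, let $\mathcal D'\subseteq\mathcal D$, and let either $\mathcal C'=\mathcal C$, or $\mathcal C'=\mathcal C\setminus\{C\}$ for a PB constraint $C$ for which there is a substitution $\omega$ with $$\mathcal C'\cup\{f\le v-1\}\cup\{\neg C\}\ \vdash\ (\mathcal C'\cup\{C\})|_\omega\cup\{f|_\omega\le f\}\cup O(\vec z|_\omega,\vec z).$$ If $(\mathcal C,\mathcal D,O,\vec z,v)$ is weakly valid then $(\mathcal C',\mathcal D',O,\vec z,v)$ is weakly valid; if it is valid then $(\mathcal C',\mathcal D',O,\vec z,v)$ is valid.
   Context: Boolean variables take values in $\{0,1\}$; a literal is a variable $x$ or $\bar x=1-x$. A PB constraint is $C:\ \sum_i a_i\ell_i\ge A$ with integer $a_i,A$; its negation $\neg C$ is $\sum_i -a_i\ell_i\ge -A+1$. A total assignment $\alpha$ satisfies $C$ if $\sum_i a_i\alpha(\ell_i)\ge A$. A PB formula is a finite set of PB constraints. A substitution $\omega$ maps variables to literals or to $\{0,1\}$ (identity outside its domain, extended to literals by $\omega(\bar x)=\overline{\omega(x)}$); $C|_\omega$ replaces each $\ell_i$ by $\omega(\ell_i)$, $G|_\omega=\{D|_\omega: D\in G\}$, and for a total assignment $\alpha$, $\alpha\circ\omega$ is $x\mapsto\alpha(\omega(x))$. An objective is $f=\sum_i w_i\ell_i$ with integer $w_i$; $f|_\omega=\sum_i w_i\omega(\ell_i)$; $f\le k$ and $f|_\omega\le f$ are read as PB constraints, and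 for $k=\infty$ the constraints $f\le\infty$, $f\le\infty-1$ are trivially true (empty). $G\vdash D$ means $D$ is derivable from $G$ in the cutting planes system (axioms from $G$, literal axioms $\ell\ge0$, positive integer linear combinations, division of a constraint with nonnegative coefficients by a positive integer rounding coefficients and degree up), where additionally $G\vdash D$ whenever $0\ge1$ is so derivable from $G\cup\{\neg D\}$; $G\vdash H$ means $G\vdash D$ for all $D\in H$. This derivability is sound. A preorder encoding is a PB formula $O(\vec u,\vec v)$ over two lists of $n$ placeholder variables with a list $\vec z=(z_1,\dots,z_n)$ of variables, such that $\alpha\preceq\beta$ iff $O(\vec z|_\alpha,\vec z|_\beta)$ is true is reflexive and transitive; here $O(\vec z|_\alpha,\vec z|_\beta)$ is $O$ with $u_i$ replaced by $\alpha(z_i)$ and $v_i$ by $\beta(z_i)$, so $O(\vec z|_\omega,\vec z)$ replaces $u_i$ by $\omega(z_i)$ and $v_i$ by $z_i$. $\alpha\preceq_f\beta$ iff $\alpha\preceq\beta$ and $f(\alpha)\le f(\beta)$. Fix input $F$ and objective $f$. A configuration $(\mathcal C,\mathcal D,O,\vec z,v)$ has PB sets $\mathcal C,\mathcal D$, a preorder encoding, and $v\in\mathbb Z\cup\{\infty\}$. It is weakly valid if (1) for every integer $v'<v$, satisfiability of $F\cup\{f\le v'\}$ implies satisfiability of $\mathcal C\cup\{f\le v'\}$; (2) every total $\rho$ satisfying $\mathcal C\cup\{f\le v-1\}$ admits a total $\rho'\preceq_f\rho$ satisfying $\mathcal C\cup\mathcal D\cup\{f\le v-1\}$. It is valid if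 also (3) $v<\infty$ implies $F\cup\{f\le v\}$ satisfiable; (4) for every integer $v'<v$, satisfiability of $\mathcal C\cup\{f\le v'\}$ implies satisfiability of $F\cup\{f\le v'\}$. *)

(* Defs.v *)
From Stdlib Require Import ZArith List Fin.
Import ListNotations.
Open Scope Z_scope.

Inductive lit (V : Type) : Type := Pos (x : V) | Neg (x : V).
Arguments Pos {V} x.
Arguments Neg {V} x.

(** A PB constraint  sum_i a_i l_i >= A  is (list of (a_i, l_i), A). *)
Definition constraint (V : Type) : Type := (list (Z * lit V) * Z)%type.
Definition terms {V} (C : constraint V) := fst C.
Definition degree {V} (C : constraint V) := snd C.

Definition var := nat.
Definition assignment := var -> bool.

Definition b2z (b : bool) : Z := if b then 1 else 0.

Definition eval_lit {V} (a : V -> bool) (l : lit V) : Z :=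
  match l with Pos x => b2z (a x) | Neg x => 1 - b2z (a x) end.

Definition eval_terms {V} (a : V -> bool) (ts : list (Z * lit V)) : Z :=
  fold_right (fun t s => fst t * eval_lit a (snd t) + s) 0 ts.

Definition sat_c {V} (a : V -> bool) (C : constraint V) : Prop :=
  eval_terms a (terms C) >= degree C.

(** A PB formula is a finite set of constraints, represented by a list;
    all notions below depend only on membership. *)
Definition sat_f {V} (a : V -> bool) (G : list (constraint V)) : Prop :=
  forall C, In C G -> sat_c a C.

Definition satisfiable (G : list (constraint var)) : Prop :=
  exists a : assignment, sat_f a G.

Definition neg_c {V} (C : constraint V) : constraint V :=
  (map (fun t => (- fst t, snd t)) (terms C), - degree C + 1).

Inductive sval (W : Type) : Type := SLit (l : lit W) | SConst (b : bool).
Arguments SLit {W} l.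
Arguments SConst {W} b.

Definition sval_neg {W} (s : sval W) : sval W :=
  match s with
  | SLit (Pos x) => SLit (Neg x)
  | SLit (Neg x) => SLit (Pos x)
  | SConst b => SConst (negb b)
  end.

Definition subst_lit {V W} (om : V -> sval W) (l : lit V) : sval W :=
  match l with Pos x => om x | Neg x => sval_neg (om x) end.

Definition subst_terms {V W} (om : V -> sval W) (ts : list (Z * lit V))
  : (list (Z * lit W) * Z) :=
  fold_right (fun t acc =>
    match subst_lit om (snd t) with
    | SLit l => ((fst t, l) :: fst acc, snd acc)
    | SConst b => (fst acc, fst t * b2z b + snd acc)
    end) ([], 0) ts.

Definition subst_c {V W} (om : V -> sval W) (C : constraint V) : constraint W :=
  let p := subst_terms om (terms C) in (fst p, degree C - snd p).

Definition subst_f {V W} (om : V -> sval W) (G : list (constraint V))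
  : list (constraint W) := map (subst_c om) G.

Definition compose (a : assignment) (om : var -> sval var) : assignment :=
  fun x => match om x with
           | SLit l => Z.eqb (eval_lit a l) 1
           | SConst b => b
           end.

Definition objective := list (Z * lit var).
Definition eval_obj (f : objective) (a : assignment) : Z := eval_terms a f.

Definition obj_le (f : objective) (k : Z) : constraint var :=
  (map (fun t => (- fst t, snd t)) f, - k).

(** v in Z u {oo}: [None] is oo. The formula {f <= v - 1} (empty for oo). *)
Definition obj_le_vm1 (f : objective) (v : option Z) : list (constraint var) :=
  match v with Some k => [obj_le f (k - 1)] | None => [] end.

(** f|_om <= f  as the PB constraint  f - (terms of f|_om) >= (const of f|_om). *)
Definition obj_subst_le (f : objective) (om : var -> sval var) : constraint var :=
  let p := subst_terms om f in
  (f ++ map (fun t => (- fst t, snd t)) (fst p), snd p).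

(** Cutting planes. Two constraints are identified when they denote the
    same linear form over variables (rewriting Neg x as 1 - x). *)
Definition coef (C : constraint var) (x : var) : Z :=
  fold_right (fun t s =>
    match snd t with
    | Pos y => if Nat.eqb x y then fst t + s else s
    | Neg y => if Nat.eqb x y then - fst t + s else s
    end) 0 (terms C).

Definition norm_degree (C : constraint var) : Z :=
  degree C - fold_right (fun t s =>
    match snd t with Pos _ => s | Neg _ => fst t + s end) 0 (terms C).

Definition same_form (C D : constraint var) : Prop :=
  (forall x, coef C x = coef D x) /\ norm_degree C = norm_degree D.

Definition ceil_div (a d : Z) : Z := (a + d - 1) / d.

Inductive cp (G : list (constraint var)) : constraint var -> Prop :=
| cp_axiom : forall C, In C G -> cp G C
| cp_lit : forall l, cp G ([(1, l)], 0)
| cp_add : forall C1 C2, cp G C1 -> cp G C2 ->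
    cp G (terms C1 ++ terms C2, degree C1 + degree C2)
| cp_scale : forall c C, c > 0 -> cp G C ->
    cp G (map (fun t => (c * fst t, snd t)) (terms C), c * degree C)
| cp_div : forall d C, d > 0 -> cp G C ->
    (forall t, In t (terms C) -> fst t >= 0) ->
    cp G (map (fun t => (ceil_div (fst t) d, snd t)) (terms C), ceil_div (degree C) d)
| cp_same : forall C D, cp G C -> same_form C D -> cp G D.

Definition derives (G : list (constraint var)) (D : constraint var) : Prop :=
  cp G D \/ cp (neg_c D :: G) ([], 1).

Definition derives_all (G H : list (constraint var)) : Prop :=
  forall D, In D H -> derives G D.

(** Preorder encodings: O(u, v) over placeholders u_i = (false, i),
    v_i = (true, i), i < n, together with z = (z_1, ..., z_n). *)
Record penc := {
  pe_n : nat;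
  pe_O : list (constraint (bool * Fin.t pe_n));
  pe_z : Fin.t pe_n -> var }.

Definition pre (O : penc) (a b : assignment) : Prop :=
  sat_f (fun p : bool * Fin.t (pe_n O) =>
           if fst p then b (pe_z O (snd p)) else a (pe_z O (snd p))) (pe_O O).

Definition is_preorder_enc (O : penc) : Prop :=
  (forall a, pre O a a) /\
  (forall a b c, pre O a b -> pre O b c -> pre O a c).

Definition O_subst (O : penc) (om : var -> sval var) : list (constraint var) :=
  subst_f (fun p : bool * Fin.t (pe_n O) =>
             if fst p then SLit (Pos (pe_z O (snd p))) else om (pe_z O (snd p)))
          (pe_O O).

Definition pre_f (O : penc) (f : objective) (a b : assignment) : Prop :=
  pre O a b /\ eval_obj f a <= eval_obj f b.

Definition lt_v (v' : Z) (v : option Z) : Prop :=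
  match v with Some k => v' < k | None => True end.

Definition weakly_valid (F : list (constraint var)) (f : objective)
  (Cs Ds : list (constraint var)) (O : penc) (v : option Z) : Prop :=
  (forall v', lt_v v' v ->
     satisfiable (F ++ [obj_le f v']) -> satisfiable (Cs ++ [obj_le f v'])) /\
  (forall rho : assignment, sat_f rho (Cs ++ obj_le_vm1 f v) ->
     exists rho', pre_f O f rho' rho /\ sat_f rho' (Cs ++ Ds ++ obj_le_vm1 f v)).

Definition valid (F : list (constraint var)) (f : objective)
  (Cs Ds : list (constraint var)) (O : penc) (v : option Z) : Prop :=
  weakly_valid F f Cs Ds O v /\
  (forall k, v = Some k -> satisfiable (F ++ [obj_le f k])) /\
  (forall v', lt_v v' v ->
     satisfiable (Cs ++ [obj_le f v']) -> satisfiable (F ++ [obj_le f v'])).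

(* Main.v *)
Require Import Defs.
From Stdlib Require Import ZArith List Lia Classical.
Import ListNotations.
Open Scope Z_scope.

Lemma b2z01 b : b2z b = 0 \/ b2z b = 1.
Proof. destruct b; simpl; auto. Qed.

Lemma eval_lit01 {V} (a : V -> bool) l : eval_lit a l = 0 \/ eval_lit a l = 1.
Proof. destruct l; simpl; destruct (a x); simpl; auto. Qed.

Lemma eval_app {V} (a : V -> bool) l1 l2 :
  eval_terms a (l1 ++ l2) = eval_terms a l1 + eval_terms a l2.
Proof. induction l1; simpl; [lia|]. unfold eval_terms in *; simpl; rewrite IHl1; lia. Qed.

Lemma eval_neg {V} (a : V -> bool) ts :
  eval_terms a (map (fun t => (- fst t, snd t)) ts) = - eval_terms a ts.
Proof. induction ts; simpl; [lia|]. unfold eval_terms in *; simpl; rewrite IHts; lia. Qed.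

Lemma eval_scale {V} (a : V -> bool) c ts :
  eval_terms a (map (fun t => (c * fst t, snd t)) ts) = c * eval_terms a ts.
Proof. induction ts; simpl; [lia|]. unfold eval_terms in *; simpl; rewrite IHts; lia. Qed.

Lemma eval_ext {V} (a b : V -> bool) ts : (forall x, a x = b x) ->
  eval_terms a ts = eval_terms b ts.
Proof.
  intro H; induction ts as [|[c l] ts IH]; simpl; auto.
  unfold eval_terms in *; simpl; rewrite IH. destruct l; simpl; rewrite H; auto.
Qed.

Lemma ceil_ge x d : d > 0 -> d * ceil_div x d >= x.
Proof.
  intro Hd; unfold ceil_div.
  pose proof (Z.div_mod (x + d - 1) d ltac:(lia)).
  pose proof (Z.mod_pos_bound (x + d - 1) d ltac:(lia)). lia.
Qed.

Lemma ceil_le A d S : d > 0 -> d * S >= A -> ceil_div A d <= S.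
Proof.
  intros Hd H; unfold ceil_div.
  assert ((A + d - 1) / d < S + 1); [|lia].
  apply Z.div_lt_upper_bound; lia.
Qed.

Lemma eval_div {V} (a : V -> bool) d ts : d > 0 ->
  d * eval_terms a (map (fun t => (ceil_div (fst t) d, snd t)) ts) >= eval_terms a ts.
Proof.
  intro Hd; induction ts as [|[c l] ts IH]; simpl; [lia|].
  unfold eval_terms in *; simpl.
  pose proof (ceil_ge c d Hd). destruct (eval_lit01 a l) as [E|E]; rewrite E; nia.
Qed.

Fixpoint sumN (N : nat) (g : nat -> Z) : Z :=
  match N with O => 0 | S n => sumN n g + g n end.

Lemma sumN_ext N g h : (forall x, (x < N)%nat -> g x = h x) -> sumN N g = sumN N h.
Proof. induction N; simpl; intros; auto. rewrite IHN by (intros; apply H; lia). rewrite H by lia; auto. Qed.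

Lemma sumN_add N g h : sumN N (fun x => g x + h x) = sumN N g + sumN N h.
Proof. induction N; simpl; lia. Qed.

Lemma sumN_single N y (h : nat -> Z) : (y < N)%nat ->
  sumN N (fun x => if Nat.eqb x y then h x else 0) = h y.
Proof.
  induction N; intros; [lia|]. simpl.
  destruct (Nat.eq_dec y N).
  - subst. rewrite Nat.eqb_refl.
    rewrite (sumN_ext _ _ (fun _ => 0)).
    + clear. induction N; simpl; lia.
    + intros. destruct (Nat.eqb_spec x N); [lia|auto].
  - rewrite IHN by lia. destruct (Nat.eqb_spec N y); [lia|lia].
Qed.

Definition lin (a : assignment) (ts : list (Z * lit var)) : Z :=
  fold_right (fun t s => match snd t with
    | Pos y => fst t * b2z (a y) + s
    | Neg y => - fst t * b2z (a y) + s end) 0 ts.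

Definition negconst (ts : list (Z * lit var)) : Z :=
  fold_right (fun t s => match snd t with Pos _ => s | Neg _ => fst t + s end) 0 ts.

Definition bnd (ts : list (Z * lit var)) : nat :=
  fold_right (fun t s => match snd t with Pos y => S y + s | Neg y => S y + s end)%nat 0%nat ts.

Lemma eval_lin a ts : eval_terms a ts = lin a ts + negconst ts.
Proof.
  induction ts as [|[c l] ts IH]; simpl; [reflexivity|].
  unfold eval_terms, lin, negconst in *; simpl. rewrite IH.
  destruct l; cbn [eval_lit fst snd]; nia.
Qed.

Lemma lin_sum a ts N : (bnd ts <= N)%nat ->
  lin a ts = sumN N (fun x => coef (ts, 0) x * b2z (a x)).
Proof.
  revert N; induction ts as [|[c l] ts IH]; intros N HN; simpl.
  - unfold lin; simpl. clear. induction N; simpl; lia.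
  - unfold lin, coef in *; simpl in *.
    destruct l as [y|y]; simpl in *.
    + rewrite (sumN_ext _ _ (fun x => (if Nat.eqb x y then c * b2z (a x) else 0) +
           fold_right (fun t s => match snd t with
              | Pos y0 => if Nat.eqb x y0 then fst t + s else s
              | Neg y0 => if Nat.eqb x y0 then - fst t + s else s end) 0 ts * b2z (a x))).
      * rewrite sumN_add, sumN_single by lia. rewrite (IH N) by lia. reflexivity.
      * intros x _. destruct (Nat.eqb x y); lia.
    + rewrite (sumN_ext _ _ (fun x => (if Nat.eqb x y then - c * b2z (a x) else 0) +
           fold_right (fun t s => match snd t with
              | Pos y0 => if Nat.eqb x y0 then fst t + s else s
              | Neg y0 => if Nat.eqb x y0 then - fst t + s else s end) 0 ts * b2z (a x))).
      * rewrite sumN_add, sumN_single by lia. rewrite (IH N) by lia. reflexivity.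
      * intros x _. destruct (Nat.eqb x y); lia.
Qed.

Lemma same_form_sat a C D : same_form C D -> sat_c a C -> sat_c a D.
Proof.
  intros [Hc Hn]. destruct C as [tc dc], D as [td dd]. unfold sat_c, norm_degree in *; simpl in *.
  rewrite !eval_lin.
  fold (negconst tc) in Hn. fold (negconst td) in Hn.
  rewrite (lin_sum a tc (bnd tc + bnd td)) by lia.
  rewrite (lin_sum a td (bnd tc + bnd td)) by lia.
  rewrite (sumN_ext _ _ (fun x => coef (td, 0) x * b2z (a x))).
  - lia.
  - intros x _. unfold coef in *; simpl in *. rewrite (Hc x). reflexivity.
Qed.

Lemma cp_sound G a D : sat_f a G -> cp G D -> sat_c a D.
Proof.
  intros HG H; induction H; unfold sat_c in *; simpl in *.
  - apply HG; auto.
  - unfold eval_terms; cbn [fold_right fst snd terms degree]. destruct (eval_lit01 a l) as [E|E]; rewrite E; lia.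
  - rewrite eval_app; lia.
  - rewrite eval_scale; nia.
  - pose proof (eval_div a d (terms C) H).
    set (S := eval_terms a (map _ _)) in *.
    pose proof (ceil_le (degree C) d S H). nia.
  - eapply same_form_sat; eauto.
Qed.

Lemma neg_sat {V} (a : V -> bool) C : ~ sat_c a C -> sat_c a (neg_c C).
Proof. unfold sat_c, neg_c; simpl. rewrite eval_neg. lia. Qed.

Lemma derives_sound G a D : sat_f a G -> derives G D -> sat_c a D.
Proof.
  intros HG [H|H]; [eapply cp_sound; eauto|].
  destruct (classic (sat_c a D)) as [S|S]; auto.
  exfalso. assert (sat_c a ([] : list (Z * lit var), 1)).
  { eapply cp_sound; [|exact H]. intros E [<-|HE]; [apply neg_sat; auto| apply HG; auto]. }
  unfold sat_c in H0; simpl in H0. unfold eval_terms in H0; simpl in H0; lia.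
Qed.

Definition comp {V W} (a : W -> bool) (om : V -> sval W) : V -> bool :=
  fun x => match om x with SLit l => Z.eqb (eval_lit a l) 1 | SConst b => b end.

Definition eval_sval {W} (a : W -> bool) (s : sval W) : Z :=
  match s with SLit l => eval_lit a l | SConst b => b2z b end.

Lemma b2z_comp {V W} (a : W -> bool) (om : V -> sval W) x :
  b2z (comp a om x) = eval_sval a (om x).
Proof.
  unfold comp; destruct (om x) as [l|b]; simpl; auto.
  destruct (eval_lit01 a l) as [E|E]; rewrite E; reflexivity.
Qed.

Lemma subst_lit_ok {V W} (a : W -> bool) (om : V -> sval W) l :
  eval_sval a (subst_lit om l) = eval_lit (comp a om) l.
Proof.
  destruct l as [x|x]; cbn [subst_lit eval_lit]; rewrite b2z_comp; auto.
  destruct (om x) as [[y|y]|b]; cbn [sval_neg eval_sval eval_lit]; try lia. destruct b; reflexivity.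
Qed.

Lemma subst_terms_ok {V W} (a : W -> bool) (om : V -> sval W) ts :
  eval_terms (comp a om) ts = eval_terms a (fst (subst_terms om ts)) + snd (subst_terms om ts).
Proof.
  induction ts as [|[c l] ts IH]; [reflexivity|].
  unfold subst_terms in *; simpl. unfold eval_terms in *; simpl in *.
  pose proof (subst_lit_ok a om l) as E.
  destruct (subst_lit om l) as [l'|b]; simpl in *; rewrite <- E, IH; lia.
Qed.

Lemma subst_c_ok {V W} (a : W -> bool) (om : V -> sval W) C :
  sat_c a (subst_c om C) -> sat_c (comp a om) C.
Proof.
  unfold sat_c, subst_c; simpl. rewrite subst_terms_ok. lia.
Qed.

Lemma obj_le_iff a f k : sat_c a (obj_le f k) <-> eval_obj f a <= k.
Proof. unfold sat_c, obj_le, eval_obj; simpl. rewrite eval_neg. lia. Qed.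

Lemma obj_subst_ok rho f om : sat_c rho (obj_subst_le f om) ->
  eval_obj f (compose rho om) <= eval_obj f rho.
Proof.
  unfold sat_c, obj_subst_le, eval_obj; simpl. rewrite eval_app, eval_neg.
  change (compose rho om) with (comp rho om). rewrite subst_terms_ok. lia.
Qed.

Lemma O_subst_ok O rho om : sat_f rho (O_subst O om) -> pre O (compose rho om) rho.
Proof.
  intros H D HD. unfold O_subst, subst_f in H.
  assert (S := subst_c_ok _ _ _ (H _ (in_map _ _ _ HD))).
  unfold sat_c in *. erewrite eval_ext; [exact S|].
  intros [[|] i]; unfold comp; simpl; auto.
  destruct (rho (pe_z O i)); reflexivity.
Qed.

Lemma sat_app {V} (a : V -> bool) l1 l2 : sat_f a (l1 ++ l2) <-> sat_f a l1 /\ sat_f a l2.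
Proof.
  unfold sat_f; split.
  - intros H; split; intros; apply H; apply in_app_iff; auto.
  - intros [H1 H2] C HC; apply in_app_iff in HC as [|]; auto.
Qed.

Lemma vm1_iff a f v : sat_f a (obj_le_vm1 f v) <-> (forall k, v = Some k -> eval_obj f a <= k - 1).
Proof.
  destruct v as [k|]; simpl; split.
  - intros H k' E; inversion E; subst. apply obj_le_iff, H; simpl; auto.
  - intros H C [<-|[]]. apply obj_le_iff, H; auto.
  - intros; discriminate.
  - intros _ C [].
Qed.

Lemma pre_f_trans O f a b c : is_preorder_enc O -> pre_f O f a b -> pre_f O f b c -> pre_f O f a c.
Proof. intros [_ T] [H1 H2] [H3 H4]; split; [eapply T; eauto|lia]. Qed.

Lemma transfer F f Cs Ds O v Cs' Ds' :
  is_preorder_enc O ->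
  (forall D, In D Ds' -> In D Ds) ->
  (forall D, In D Cs' -> In D Cs) ->
  (forall rho, sat_f rho Cs' -> sat_f rho (obj_le_vm1 f v) ->
     exists r, pre_f O f r rho /\ sat_f r Cs) ->
  (weakly_valid F f Cs Ds O v -> weakly_valid F f Cs' Ds' O v) /\
  (valid F f Cs Ds O v -> valid F f Cs' Ds' O v).
Proof.
  intros HO HD HC K.
  assert (W : weakly_valid F f Cs Ds O v -> weakly_valid F f Cs' Ds' O v).
  { intros [W1 W2]; split.
    - intros v' Hv Hs. destruct (W1 v' Hv Hs) as [a Ha]. exists a.
      apply sat_app in Ha as [Ha1 Ha2]. apply sat_app; split; auto.
      intros C HC'; apply Ha1, HC, HC'.
    - intros rho Hr. apply sat_app in Hr as [Hr1 Hr2].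
      destruct (K rho Hr1 Hr2) as [r [Hpr Hr]].
      assert (Hrv : sat_f r (obj_le_vm1 f v)).
      { apply vm1_iff. intros k Ek. apply vm1_iff with (k := k) in Hr2; auto.
        destruct Hpr; lia. }
      destruct (W2 r (proj2 (sat_app _ _ _) (conj Hr Hrv))) as [r' [Hp' Hs']].
      exists r'. split; [eapply pre_f_trans; eauto|].
      apply sat_app in Hs' as [S1 S2]. apply sat_app in S2 as [S2 S3].
      apply sat_app; split; [intros C HC'; apply S1, HC, HC'|].
      apply sat_app; split; auto. intros C HC'; apply S2, HD, HC'. }
  split; auto.
  intros [V1 [V2 V3]]; split; [auto|split; auto].
  intros v' Hv [rho Hr]. apply sat_app in Hr as [Hr1 Hr2].
  assert (Hle : eval_obj f rho <= v').
  { apply obj_le_iff, Hr2; simpl; auto. }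
  assert (Hrv : sat_f rho (obj_le_vm1 f v)).
  { apply vm1_iff. intros k Ek; subst; simpl in Hv; lia. }
  destruct (K rho Hr1 Hrv) as [r [Hpr Hr]].
  apply V3; auto. exists r. apply sat_app; split; auto.
  intros C [<-|[]]. apply obj_le_iff. destruct Hpr; lia.
Qed.

Theorem mainTheorem5 (F : list (constraint var)) (f : objective)
  (Cs Ds : list (constraint var)) (O : penc) (v : option Z)
  (Cs' Ds' : list (constraint var)) :
  is_preorder_enc O ->
  (forall D, In D Ds' -> In D Ds) ->
  ((forall D, In D Cs' <-> In D Cs) \/
   (exists C : constraint var,
      (forall D, In D Cs' <-> (In D Cs /\ D <> C)) /\
      exists om : var -> sval var,
        derives_all (Cs' ++ obj_le_vm1 f v ++ [neg_c C])
          (subst_f om (C :: Cs') ++ [obj_subst_le f om] ++ O_subst O om))) ->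
  (weakly_valid F f Cs Ds O v -> weakly_valid F f Cs' Ds' O v) /\
  (valid F f Cs Ds O v -> valid F f Cs' Ds' O v).
Proof.
  intros HO HD [HC | [C [HC [om Hder]]]].
  - apply transfer; auto.
    + intros D; apply HC.
    + intros rho H1 H2. exists rho. split; [split; [apply HO|lia]|].
      intros D HD'. apply H1, HC, HD'.
  - apply transfer; auto.
    + intros D HD'. apply HC, HD'.
    + intros rho H1 H2.
      destruct (classic (sat_c rho C)) as [SC|SC].
      * exists rho. split; [split; [apply HO|lia]|].
        intros D HD'. destruct (classic (D = C)) as [->|NE]; auto.
        apply H1, HC; auto.
      * assert (G : sat_f rho (Cs' ++ obj_le_vm1 f v ++ [neg_c C])).
        { apply sat_app; split; auto. apply sat_app; split; auto.
          intros D [<-|[]]. apply neg_sat; auto. }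
        assert (T : forall D, In D (subst_f om (C :: Cs') ++ [obj_subst_le f om] ++ O_subst O om) ->
                      sat_c rho D).
        { intros D HD'. eapply derives_sound; [exact G|]. apply Hder; auto. }
        exists (compose rho om). split; [split|].
        -- apply O_subst_ok. intros D HD'. apply T, in_app_iff; right; apply in_app_iff; right; auto.
        -- apply obj_subst_ok. apply T, in_app_iff; right; apply in_app_iff; left; simpl; auto.
        -- intros D HD'.
           assert (In D (C :: Cs')).
           { destruct (classic (D = C)) as [->|NE]; [left; auto|right; apply HC; auto]. }
           change (compose rho om) with (comp rho om).
           apply subst_c_ok. apply T, in_app_iff; left. unfold subst_f. apply in_map; auto.
Qed.
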